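(* Let $(A,\mathcal H)$ be a left bialgebroid. For every right $\mathcal H$-comodule $A^o$-subring $B$ of $\mathcal H$ via $t$, the set $\mathcal HB^+$ is a left ideal two-sided coideal of $\mathcal H$, and the assignment $B\mapsto\mathcal HB^+$ is inclusion-preserving.
   Context: $\Bbbk$ is a field. A left bialgebroid $(A,\mathcal H)$: $\Bbbk$-algebras $A,\mathcal H$, algebra maps $s:A\to\mathcal H$, $t:A^o\to\mathcal H$ with commuting images, $A$-bilinear $\Delta:\mathcal H\to\mathcal H\otimes_A\mathcal H$, $\varepsilon:\mathcal H\to A$ (bimodule structure $a\cdot h\cdot b=s(a)t(b)h$; $\mathcal H\otimes_A\mathcal H$ = quotient of $\mathcal H\otimes\mathcal H$ by span of $t(a)x\otimes y-x\otimes s(a)y$), with $(\mathcal H,\Delta,\varepsilon)$ a coassociative counital $A$-coring, $\Delta$ an algebra map into the Takeuchi product $\{\sum x_i\otimes_Ay_i:\sum x_it(a)\otimes_Ay_i=\sum x_i\otimes_Ay_is(a)\ \forall a\}$, $\varepsilon(xs(\varepsilon(y)))=\varepsilon(xy)=\varepsilon(xt(\varepsilon(y)))$, $\varepsilon(1)=1$. $\mathcal H^+=\ker\varepsilon$, $B^+=B\cap\mathcal H^+$. Right $\mathcal H$-comodule $A^o$-subring via $t$: subalgebra $B\supseteq t(A)$ with a coassociative counital right $A$-linear coaction $\delta:B\to B\otimes_A\mathcal H$ ($b\cdot a=t(a)b$; $\mathcal H$ left via $s$) such that $(\iota\otimes_A\mathcal H)\delta=\Delta\iota$, $\iota$ the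 inclusion. Left ideal two-sided coideal: left ideal $I$ with $\varepsilon(I)=0$ and $\Delta(I)\subseteq$ image of $I\otimes_A\mathcal H+\mathcal H\otimes_AI$ in $\mathcal H\otimes_A\mathcal H$. *)

(* Defs.v *)
(* Left bialgebroids over a field k, with balanced tensor
   products over A represented by finite formal sums of simple tensors
   (seq of pairs / triples), identified via the universal property of
   the balanced tensor product. *)
From HB Require Import structures.
From mathcomp Require Import all_boot all_order all_algebra.
Set Implicit Arguments. Unset Strict Implicit. Unset Printing Implicit Defensive.
Import GRing.Theory.
Local Open Scope ring_scope.

Section Bialgebroid.
Variables (k : fieldType) (A H : algType k).
Variables (s t : A -> H).

(* phi : H -> H -> V is k-bilinear (first argument restricted to the
   k-subspace P) and A-balanced: phi (x . a) y = phi x (a . y), where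
   x . a = t(a) x and a . y = s(a) y. *)
Definition balanced2 (P : H -> Prop) (V : lmodType k) (phi : H -> H -> V) :=
  ( (forall (c : k) x x' y, P x -> P x' ->
         phi (c *: x + x') y = c *: phi x y + phi x' y) /\
      (forall (c : k) x y y', P x ->
         phi x (c *: y + y') = c *: phi x y + phi x y') /\
      (forall a x y, P x -> phi (t a * x) y = phi x (s a * y))).

(* equality in P (x)_A H of the formal sums u and v (first legs in P);
   P = fun _ => True gives H (x)_A H *)
Definition tensor2_eq (P : H -> Prop) (u v : seq (H * H)) : Prop :=
  forall (V : lmodType k) (phi : H -> H -> V), balanced2 P phi ->
    \sum_(p <- u) phi p.1 p.2 = \sum_(p <- v) phi p.1 p.2.

Definition balanced3 (P : H -> Prop) (V : lmodType k) (phi : H -> H -> H -> V) :=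
  ( (forall (c : k) x x' y z, P x -> P x' ->
         phi (c *: x + x') y z = c *: phi x y z + phi x' y z) /\
      (forall (c : k) x y y' z, P x ->
         phi x (c *: y + y') z = c *: phi x y z + phi x y' z) /\
      (forall (c : k) x y z z', P x ->
         phi x y (c *: z + z') = c *: phi x y z + phi x y z') /\
      (forall a x y z, P x -> phi (t a * x) y z = phi x (s a * y) z) /\
      (forall a x y z, P x -> phi x (t a * y) z = phi x y (s a * z))).

Definition tensor3_eq (P : H -> Prop) (u v : seq (H * H * H)) : Prop :=
  forall (V : lmodType k) (phi : H -> H -> H -> V), balanced3 P phi ->
    \sum_(p <- u) phi p.1.1 p.1.2 p.2 = \sum_(p <- v) phi p.1.1 p.1.2 p.2.

Definition allH : H -> Prop := fun _ => True.

(* (A, H, s, t, Delta, eps) is a left bialgebroid; Delta h is a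
   representative of Delta(h) in H (x)_A H *)
Definition is_left_bialgebroid (Delta : H -> seq (H * H)) (eps : H -> A) : Prop :=
  (
      ( (forall (c : k) a b, s (c *: a + b) = c *: s a + s b) /\
          (forall a b, s (a * b) = s a * s b) /\
          s 1 = 1) /\
      ( (forall (c : k) a b, t (c *: a + b) = c *: t a + t b) /\
          (forall a b, t (a * b) = t b * t a) /\
          t 1 = 1) /\
      (forall a b, s a * t b = t b * s a) /\
      ( (forall (c : k) x y, tensor2_eq allH (Delta (c *: x + y))
                 ([seq (c *: p.1, p.2) | p <- Delta x] ++ Delta y)) /\
          (forall a b h, tensor2_eq allH (Delta (s a * t b * h))
                 [seq (s a * p.1, t b * p.2) | p <- Delta h])) /\
      ( (forall (c : k) x y, eps (c *: x + y) = c *: eps x + eps y) /\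
          (forall a b h, eps (s a * t b * h) = a * eps h * b)) /\
      (forall h, tensor3_eq allH
          [seq (q.1, q.2, p.2) | p <- Delta h, q <- Delta p.1]
          [seq (p.1, q.1, q.2) | p <- Delta h, q <- Delta p.2]) /\
      (forall h, \sum_(p <- Delta h) s (eps p.1) * p.2 = h /\
                 \sum_(p <- Delta h) t (eps p.2) * p.1 = h) /\
      (* Delta lands in the Takeuchi product and is an algebra map *)
      ( (forall h a, tensor2_eq allH [seq (p.1 * t a, p.2) | p <- Delta h]
                                      [seq (p.1, p.2 * s a) | p <- Delta h]) /\
          (forall x y, tensor2_eq allH (Delta (x * y))
              [seq (p.1 * q.1, p.2 * q.2) | p <- Delta x, q <- Delta y]) /\
          tensor2_eq allH (Delta 1) [:: (1, 1)]) /\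
      ( (forall x y, eps (x * s (eps y)) = eps (x * y)) /\
          (forall x y, eps (x * y) = eps (x * t (eps y))) /\
          eps 1 = 1)).

(* B is a right H-comodule A^o-subring of H via t, with coaction delta;
   delta b is a representative of delta(b) in B (x)_A H *)
Definition is_comodule_subring (Delta : H -> seq (H * H)) (eps : H -> A)
    (B : H -> Prop) (delta : H -> seq (H * H)) : Prop :=
  (
      ( B 1 /\ (forall x y, B x -> B y -> B (x + y)) /\
          (forall (c : k) x, B x -> B (c *: x)) /\
          (forall x y, B x -> B y -> B (x * y)) /\
          (forall a, B (t a))) /\
      (forall b p, B b -> p \in delta b -> B p.1) /\
      ( (forall (c : k) x y, B x -> B y -> tensor2_eq B (delta (c *: x + y))
                 ([seq (c *: p.1, p.2) | p <- delta x] ++ delta y)) /\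
          (forall a b, B b -> tensor2_eq B (delta (t a * b))
                 [seq (p.1, t a * p.2) | p <- delta b])) /\
      (forall b, B b -> tensor3_eq B
          [seq (q.1, q.2, p.2) | p <- delta b, q <- delta p.1]
          [seq (p.1, q.1, q.2) | p <- delta b, q <- Delta p.2]) /\
      (forall b, B b -> \sum_(p <- delta b) t (eps p.2) * p.1 = b) /\
      (forall b, B b -> tensor2_eq allH (delta b) (Delta b))).

Definition HBplus (eps : H -> A) (B : H -> Prop) : H -> Prop :=
  fun x => exists l : seq (H * H),
    (forall p, p \in l -> B p.2 /\ eps p.2 = 0) /\
    x = \sum_(p <- l) p.1 * p.2.

Definition is_left_ideal_coideal (Delta : H -> seq (H * H)) (eps : H -> A)
    (I : H -> Prop) : Prop :=
  ( I 0 /\ (forall x y, I x -> I y -> I (x + y)) /\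
      (forall h x, I x -> I (h * x)) /\
      (forall x, I x -> eps x = 0) /\
      (forall x, I x -> exists u : seq (H * H),
          (forall p, p \in u -> I p.1 \/ I p.2) /\
          tensor2_eq allH (Delta x) u)).

End Bialgebroid.

(* Main.v *)
Set Warnings "-notation-overridden,-ambiguous-paths,-notation-incompatible-prefix".
Require Import Defs.
From HB Require Import structures.
From mathcomp Require Import all_boot all_order all_algebra.
Set Implicit Arguments. Unset Strict Implicit. Unset Printing Implicit Defensive.
Import GRing.Theory.
Local Open Scope ring_scope.

Lemma bal_props (k : fieldType) (A H : algType k) (s t : A -> H)
   (V : lmodType k) (phi : H -> H -> V) :
  balanced2 s t (@allH k H) phi ->
  (forall x x' y, phi (x + x') y = phi x y + phi x' y) /\
  (forall x y y', phi x (y + y') = phi x y + phi x y') /\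
  (forall y, phi 0 y = 0) /\ (forall x, phi x 0 = 0) /\
  (forall a x y, phi (t a * x) y = phi x (s a * y)).
Proof.
move=> [L [R T]].
have AL : forall x x' y, phi (x + x') y = phi x y + phi x' y.
  by move=> x x' y; have := L 1 x x' y I I; rewrite !scale1r.
have AR : forall x y y', phi x (y + y') = phi x y + phi x y'.
  by move=> x y y'; have := R 1 x y y' I; rewrite !scale1r.
have Z : forall (v : V), v = v + v -> v = 0.
  by move=> v /eqP; rewrite -subr_eq subrr eq_sym => /eqP.
split=> //; split=> //; split.
  by move=> y; apply: Z; rewrite -AL addr0.
split; last by move=> a x y; exact: T.
by move=> x; apply: Z; rewrite -AR addr0.
Qed.

Lemma dbl0 (V : zmodType) (v : V) : v = v + v -> v = 0.
Proof. by move/eqP; rewrite -subr_eq subrr eq_sym => /eqP. Qed.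

Lemma bal_mulr (k : fieldType) (A H : algType k) (s t : A -> H)
   (V : lmodType k) (phi : H -> H -> V) (x y : H) :
  balanced2 s t (@allH k H) phi ->
  balanced2 s t (@allH k H) (fun u v => phi (u * x) (v * y)).
Proof.
move=> [L [R T]]; split; [|split].
- by move=> c u u' v _ _; rewrite mulrDl -scalerAl L.
- by move=> c u v v' _; rewrite mulrDl -scalerAl R.
- by move=> a u v _; rewrite -mulrA T // mulrA.
Qed.

Lemma bal_sumr (k : fieldType) (A H : algType k) (s t : A -> H)
   (V : lmodType k) (phi : H -> H -> V) (I : Type) (r : seq I) (F : I -> H) x :
  balanced2 s t (@allH k H) phi ->
  phi x (\sum_(i <- r) F i) = \sum_(i <- r) phi x (F i).
Proof.
move=> bp; have [_ [AR [_ [Z0r _]]]] := bal_props bp.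
by apply: (big_morph (phi x)) => //; exact: AR.
Qed.

Theorem proposition2p6 (k : fieldType) (A H : algType k) (s t : A -> H)
    (Delta : H -> seq (H * H)) (eps : H -> A) :
  is_left_bialgebroid s t Delta eps ->
  (forall (B : H -> Prop) (delta : H -> seq (H * H)),
      is_comodule_subring s t Delta eps B delta ->
      is_left_ideal_coideal s t Delta eps (HBplus eps B)) /\
  (forall (B1 B2 : H -> Prop) (delta1 delta2 : H -> seq (H * H)),
      is_comodule_subring s t Delta eps B1 delta1 ->
      is_comodule_subring s t Delta eps B2 delta2 ->
      (forall x, B1 x -> B2 x) ->
      forall x, HBplus eps B1 x -> HBplus eps B2 x).
Proof.
move=> [[sL [sM s1]] [[tL [tM t1]] [stC [[DL DB] [[eL eB] [Dco [Dcu [[Tak [DM D1]] [eS [eT e1]]]]]]]]]].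
have eA : forall x y, eps (x + y) = eps x + eps y.
  by move=> x y; have := eL 1 x y; rewrite !scale1r.
have e0 : eps 0 = 0.
  by apply: dbl0; rewrite -eA addr0.
have t0 : t 0 = 0.
  by apply: dbl0; have := tL 1 0 0; rewrite !scale1r addr0.
have etx : forall a x, eps (t a * x) = eps x * a.
  by move=> a x; have := eB 1 a x; rewrite s1 !mul1r.
have eta : forall a, eps (t a) = a.
  by move=> a; have := etx a 1; rewrite mulr1 e1 mul1r.
have ehb : forall h b, eps b = 0 -> eps (h * b) = 0.
  by move=> h b eb; rewrite eT eb t0 mulr0 e0.
have DA : forall x y : H, tensor2_eq s t (@allH k H) (Delta (x + y)) (Delta x ++ Delta y).
  move=> x y V phi bp; have := DL 1 x y V phi bp; rewrite scale1r => ->.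
  by rewrite !big_cat /= big_map; congr (_ + _); apply: eq_bigr => p _; rewrite scale1r.
have D0 : forall (V : lmodType k) (phi : H -> H -> V), balanced2 s t (@allH k H) phi ->
    \sum_(p <- Delta 0) phi p.1 p.2 = 0.
  by move=> V phi bp; apply: dbl0; have := DA 0 0 V phi bp; rewrite addr0 big_cat.
split; last first.
  move=> B1 B2 d1 d2 _ _ sub x [l [H1 ->]]; exists l; split=> // p /H1 [b e].
  by split=> //; exact: sub.
move=> B delta [[B1 [BD [BZ [BM Bt]]]] [Bleg [_ [_ [_ deltaD]]]]].
have key : forall h b, B b -> eps b = 0 -> exists u : seq (H * H),
    (forall p, p \in u -> HBplus eps B p.1 \/ HBplus eps B p.2) /\
    tensor2_eq s t (@allH k H) (Delta (h * b)) u.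
  move=> h b Bb eb.
  exists ([seq (p.1 * (q.1 - t (eps q.1)), p.2 * q.2) | p <- Delta h, q <- delta b]
          ++ [seq (p.1, p.2 * b) | p <- Delta h]).
  split.
    move=> z; rewrite mem_cat => /orP [/allpairsP [[p q] [_ qd ->]] | /mapP [p _ ->]] /=.
      left; exists [:: (p.1, q.1 - t (eps q.1))]; split; last by rewrite big_seq1.
      move=> r; rewrite inE => /eqP -> /=; split.
        by rewrite -scaleN1r; apply: BD; [exact: Bleg qd | apply: BZ; apply: Bt].
      by rewrite -scaleN1r addrC eL eta scaleN1r addNr.
    right; exists [:: (p.2, b)]; split; last by rewrite big_seq1.
    by move=> r; rewrite inE => /eqP -> /=.
  move=> V phi bp; have [AL [AR [Z0l [Z0r Tb]]]] := bal_props bp.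
  have [L [R T]] := bp.
  rewrite (DM h b V phi bp) big_allpairs_dep /= big_cat /= big_allpairs_dep /= big_map /=.
  pose psi := fun x y => \sum_(p <- Delta h) phi (p.1 * x) (p.2 * y).
  have psib : balanced2 s t (@allH k H) psi.
    split; [|split].
    - move=> c x x' y _ _; rewrite /psi scaler_sumr -big_split; apply: eq_bigr => p _ /=.
      by rewrite mulrDr -scalerAr L.
    - move=> c x y y' _; rewrite /psi scaler_sumr -big_split; apply: eq_bigr => p _ /=.
      by rewrite mulrDr -scalerAr R.
    - move=> a x y _; rewrite /psi.
      have := Tak h a V _ (bal_mulr x y bp); rewrite !big_map /=.
      by under eq_bigr do rewrite -mulrA; move=> ->; apply: eq_bigr => p _; rewrite mulrA.
  pose chi := fun x y : H => s (eps x) * y.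
  have chib : balanced2 s t (@allH k H) chi.
    split; [|split].
    - by move=> c x x' y _ _; rewrite /chi eL sL mulrDl scalerAl.
    - by move=> c x y y' _; rewrite /chi mulrDr scalerAr.
    - by move=> a x y _; rewrite /chi etx sM mulrA.
  have cb : \sum_(q <- delta b) s (eps q.1) * q.2 = b.
    by have := deltaD b Bb H chi chib; rewrite /chi => ->; exact: (Dcu b).1.
  transitivity (\sum_(q <- Delta b) psi q.1 q.2); first by rewrite exchange_big.
  rewrite -(deltaD b Bb V psi psib) [X in _ = X + _]exchange_big /=.
  have step : forall q : H * H, psi q.1 q.2 =
      \sum_(p <- Delta h) phi (p.1 * (q.1 - t (eps q.1))) (p.2 * q.2) +
      \sum_(p <- Delta h) phi p.1 (p.2 * (s (eps q.1) * q.2)).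
    move=> q; rewrite /psi.
    have := Tak h (eps q.1) V _ (bal_mulr 1 q.2 bp); rewrite !big_map /=.
    under eq_bigr do rewrite mulr1; under [X in _ = X -> _]eq_bigr do rewrite mulr1.
    move=> E.
    transitivity (\sum_(p <- Delta h) (phi (p.1 * (q.1 - t (eps q.1))) (p.2 * q.2)
                   + phi (p.1 * t (eps q.1)) (p.2 * q.2))).
      by apply: eq_bigr => p _; rewrite -AL -mulrDr subrK.
    rewrite big_split /= E; congr (_ + _).
    by apply: eq_bigr => p _; rewrite mulrA.
  under eq_bigr do rewrite step.
  rewrite big_split /=; congr (_ + _); rewrite exchange_big /=.
  by apply: eq_bigr => p _; rewrite -(bal_sumr _ _ _ bp) -mulr_sumr cb.
have main : forall l : seq (H * H), (forall p, p \in l -> B p.2 /\ eps p.2 = 0) ->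
    exists u : seq (H * H),
    (forall p, p \in u -> HBplus eps B p.1 \/ HBplus eps B p.2) /\
    tensor2_eq s t (@allH k H) (Delta (\sum_(p <- l) p.1 * p.2)) u.
  elim=> [|p l IH] Hl.
    by exists [::]; split=> // V phi bp; rewrite !big_nil; exact: D0.
  have [Bp ep] := Hl p (mem_head _ _).
  have [u1 [m1 e1']] := key p.1 p.2 Bp ep.
  have [u2 [m2 e2']] : exists u : seq (H * H),
    (forall p, p \in u -> HBplus eps B p.1 \/ HBplus eps B p.2) /\
    tensor2_eq s t (@allH k H) (Delta (\sum_(p <- l) p.1 * p.2)) u.
    by apply: IH => q hq; apply: Hl; rewrite inE hq orbT.
  exists (u1 ++ u2); split.
    by move=> z; rewrite mem_cat => /orP [/m1|/m2].
  by move=> V phi bp; rewrite big_cons (DA _ _ V phi bp) !big_cat /= e1' // e2'.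
split.
  by exists [::]; split=> //; rewrite big_nil.
split.
  move=> x y [l1 [H1 ->]] [l2 [H2 ->]]; exists (l1 ++ l2); rewrite big_cat; split=> //.
  by move=> p; rewrite mem_cat => /orP [/H1|/H2].
split.
  move=> h x [l [H1 ->]]; exists [seq (h * p.1, p.2) | p <- l]; split.
    by move=> q /mapP [p pl ->]; exact: H1 p pl.
  by rewrite big_map mulr_sumr; apply: eq_bigr => p _; rewrite mulrA.
split.
  move=> x [l [H1 ->]]; rewrite (big_morph eps eA e0) big1_seq //.
  by move=> p /andP [_ pl]; have [_ e] := H1 p pl; exact: ehb.
by move=> x [l [H1 ->]]; exact: main.
Qed.
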